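(* Let $\Bbbk$ be a field of characteristic $p>3$. Then there exists a finite-dimensional $\Bbbk$-vector space $A$ with a symmetric trilinear operation $(\cdot,\cdot,\cdot):A^3\to A$ such that $A$ is Engel (for every $x\in A$ the linear map $y\mapsto (x,x,y)$ is nilpotent) but $A$ is not weakly nilpotent.
   Context: For an algebra $A$ (a vector space with multilinear operations), a monomial is a formal expression built from variables by applying the operations; its degree is the number of occurrences of variables. An element $a\in A$ is nilpotent of index $\le n$ if $M(a,a,\dots,a)=0$ for every monomial $M$ of degree $\ge n$; $A$ is weakly nilpotent if every element of $A$ is nilpotent (of some index). *)

(* Defs.v *)
From HB Require Import structures.
From mathcomp Require Import all_boot all_order all_algebra.
Set Implicit Arguments. Unset Strict Implicit. Unset Printing Implicit Defensive.
Import GRing.Theory.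
Local Open Scope ring_scope.

Inductive tmonomial : Type :=
| TVar : tmonomial
| TOp : tmonomial -> tmonomial -> tmonomial -> tmonomial.

Fixpoint tdeg (m : tmonomial) : nat :=
  match m with
  | TVar => 1
  | TOp m1 m2 m3 => (tdeg m1 + tdeg m2 + tdeg m3)%N
  end.

Fixpoint teval (T : Type) (op : T -> T -> T -> T) (a : T) (m : tmonomial) : T :=
  match m with
  | TVar => a
  | TOp m1 m2 m3 => op (teval op a m1) (teval op a m2) (teval op a m3)
  end.

Section Ternary.
Variables (K : fieldType) (A : lmodType K) (op : A -> A -> A -> A).

Definition trilinear : Prop :=
  (forall (c : K) x x' y z, op (c *: x + x') y z = c *: op x y z + op x' y z) /\
  (forall (c : K) x y y' z, op x (c *: y + y') z = c *: op x y z + op x y' z) /\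
  (forall (c : K) x y z z', op x y (c *: z + z') = c *: op x y z + op x y z').

Definition symmetric3 : Prop :=
  (forall x y z, op x y z = op y x z) /\ (forall x y z, op x y z = op x z y).

Definition nilpotent_of_index (a : A) (n : nat) : Prop :=
  forall m : tmonomial, (n <= tdeg m)%N -> teval op a m = 0.

Definition nilpotent_elt (a : A) : Prop := exists n, nilpotent_of_index a n.

Definition weakly_nilpotent : Prop := forall a : A, nilpotent_elt a.

Definition engel : Prop :=
  forall x : A, exists k : nat, forall y : A, iter k (op x x) y = 0.
End Ternary.

(* Main.v *)
Require Import Defs.
From HB Require Import structures.
From mathcomp Require Import all_boot all_order all_algebra.
From mathcomp Require Import ring zify.
Set Implicit Arguments. Unset Strict Implicit. Unset Printing Implicit Defensive.
Import GRing.Theory.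
Local Open Scope ring_scope.

Section Poly.
Variables (K : fieldType) (p : nat).
Hypothesis hp : p \in [pchar K].
Hypothesis hp3 : (3 < p)%N.

Definition tr (f : {poly K}) := take_poly p f.
Definition Tp (f : {poly K}) := tr ('X * f).
Definition Nop (s u : K) (f : {poly K}) := s *: f^`() + u *: Tp f.

Lemma tr_mull (f g : {poly K}) : tr (tr f * g) = tr (f * g).
Proof.
rewrite /tr -{2}(poly_take_drop p f) mulrDl take_polyD.
by rewrite mulrAC take_polyMXn_0 addr0.
Qed.

Lemma tr_mulr (f g : {poly K}) : tr (f * tr g) = tr (f * g).
Proof. by rewrite mulrC tr_mull mulrC. Qed.

Lemma deriv_tr (g : {poly K}) : (tr g)^`() = tr (g^`()).
Proof.
apply/polyP => i; rewrite /tr coef_deriv !coef_take_poly coef_deriv.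
case: (ltnP i.+1 p) => hi; case: (ltnP i p) => hi2 //.
- by exfalso; move: (leq_ltn_trans hi2 (ltnW hi)); rewrite ltnn.
- have -> : i.+1 = p by apply/eqP; rewrite eqn_leq hi2 hi.
  by rewrite mul0rn -mulr_natr (pcharf0 hp) mulr0.
- by rewrite mul0rn.
Qed.

Lemma size_tr (f : {poly K}) : (size (tr f) <= p)%N.
Proof. exact: size_take_poly. Qed.

Lemma tr_id (f : {poly K}) : (size f <= p)%N -> tr f = f.
Proof. exact: take_poly_id. Qed.

Lemma size_deriv_le (f : {poly K}) n : (size f <= n)%N -> (size f^`() <= n)%N.
Proof.
move=> h; have [->|nz] := eqVneq f 0; first by rewrite deriv0 size_poly0.
exact: leq_trans (ltnW (lt_size_deriv nz)) h.
Qed.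

Lemma size_Nop s u (f : {poly K}) : (size f <= p)%N -> (size (Nop s u f) <= p)%N.
Proof.
move=> h; rewrite /Nop; apply: leq_trans (size_polyD _ _) _.
rewrite geq_max; apply/andP; split; apply: leq_trans (size_scale_leq _ _) _.
  exact: size_deriv_le.
exact: size_tr.
Qed.


Lemma pprime : prime p. Proof. exact: pcharf_prime hp. Qed.

Lemma podd : odd p.
Proof. by case: (even_prime pprime) => // h; move: hp3; rewrite h. Qed.

Lemma natr_neq0 k : (0 < k)%N -> (k < p)%N -> k%:R != 0 :> K.
Proof.
move=> k0 kp; rewrite -(dvdn_pcharf hp); apply/negP => /(dvdn_leq k0).
by rewrite leqNgt kp.
Qed.

Lemma fact_neq0 k : (k < p)%N -> k`!%:R != 0 :> K.
Proof.
elim: k => [|k IH] kp; first by rewrite fact0 oner_neq0.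
rewrite factS natrM mulf_neq0 //; first exact: natr_neq0.
by apply: IH; apply: ltnW.
Qed.

Lemma two_neq0 : 2%:R != 0 :> K.
Proof. by apply: natr_neq0 => //; apply: leq_trans hp3. Qed.

Lemma poly_eq0_small (g : {poly K}) :
  (size g <= p)%N -> (forall i, (i < p)%N -> g`_i = 0) -> g = 0.
Proof.
move=> hs hc; apply/polyP => i; rewrite coef0.
case: (ltnP i p) => hi; first exact: hc.
by rewrite nth_default // (leq_trans hs hi).
Qed.

Lemma iter_T_coef u k (f : {poly K}) i :
  (i < k)%N -> (iter k (fun g => u *: Tp g) f)`_i = 0.
Proof.
elim: k i => [|k IH] i hi //=.
rewrite coefZ /Tp /tr coef_take_poly coefXM.
case: (i < p)%N; last by rewrite mulr0.
case: i hi => [|i] hi //=; first by rewrite mulr0.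
by rewrite IH ?mulr0.
Qed.

Lemma Nop_nil0 u (f : {poly K}) : (size f <= p)%N -> iter p (Nop 0 u) f = 0.
Proof.
move=> hs; have -> : iter p (Nop 0 u) f = iter p (fun g => u *: Tp g) f.
  by apply: eq_iter => g; rewrite /Nop scale0r add0r.
apply: poly_eq0_small; last by move=> i hi; apply: iter_T_coef.
have h : forall n, (size (iter n (fun g => u *: Tp g) f) <= p)%N.
  elim => [|n IH] //=.
  exact: leq_trans (size_scale_leq _ _) (size_tr _).
exact: h.
Qed.

Section Exp.
Variable c : K.
Let h := c / 2%:R.
Definition ee (i : nat) : K :=
  if odd i then 0 else h ^+ (i./2) / (i./2)`!%:R.
Definition EE : {poly K} := \poly_(i < p) ee i.

Lemma coefEE0 : EE`_0 = 1.
Proof.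
rewrite /EE coef_poly ifT; last by apply: leq_trans hp3.
by rewrite /ee /= expr0 fact0 invr1 mulr1.
Qed.

Lemma ee_step m : (m.*2.+2 < p)%N -> ee m.*2.+2 *+ m.*2.+2 = c * ee m.*2.
Proof.
move=> hm.
have hm1 : (m.+1 < p)%N.
  by move: hm; rewrite -mul2n; lia.
rewrite /ee /= !odd_double /= !doubleK.
have f1 := fact_neq0 hm1.
have f0 : m`!%:R != 0 :> K by apply: fact_neq0; apply: ltnW.
have n1 : m.+1%:R != 0 :> K by apply: natr_neq0.
have t2 := two_neq0.
rewrite -[_ *+ m.*2.+2]mulr_natr factS natrM /h.
have -> : (m.*2.+2)%:R = 2%:R * m.+1%:R :> K by rewrite -natrM mul2n doubleS.
rewrite exprS; field.
by rewrite f0 t2 addrC natr1 n1.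
Qed.

Lemma EE_deriv : tr (EE^`()) = tr (c *: ('X * EE)).
Proof.
apply/polyP => i; rewrite /tr !coef_take_poly.
case: (ltnP i p) => hi //.
rewrite coef_deriv coefZ coefXM /EE !coef_poly.
case: i hi => [|j] hj.
  by rewrite /= mulr0 /ee /= if_same.
rewrite /= (ltnW hj).
case: (ltnP j.+2 p) => hj2.

  have := odd_double_half j; case hoj: (odd j) => /= hjj.
    by rewrite /ee /= hoj /= mulr0 mul0rn.
  have hjm : j = (j./2).*2 by rewrite -[LHS]hjj.
  move: hjm hj2; move: (j./2) => m -> hj2.
  exact: ee_step.
rewrite mul0rn /ee.
have hjp : j.+2 = p by apply/eqP; rewrite eqn_leq hj2 andbT.
have : odd j.+2 by rewrite hjp podd.
by rewrite /= negbK => ->; rewrite mulr0.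
Qed.

Definition Phi (f : {poly K}) := tr (EE * f).

Lemma Phi_deriv (f : {poly K}) : (Phi f)^`() = Phi (Nop 1 c f).
Proof.
rewrite /Phi deriv_tr derivM /tr take_polyD -/(tr _) -/(tr _).
rewrite -tr_mull EE_deriv tr_mull /Nop scale1r mulrDr take_polyD -/(tr _) -/(tr _).
rewrite addrC; congr (_ + _).
rewrite -scalerAl -scalerAr /tr !take_polyZ -/(tr _) -/(tr _) /Tp tr_mulr.
by rewrite mulrA (mulrC 'X).
Qed.

Lemma Phi_iter n (f : {poly K}) :
  iter n (fun g => g^`()) (Phi f) = Phi (iter n (Nop 1 c) f).
Proof. by elim: n => [|n IH] //=; rewrite IH Phi_deriv. Qed.

Lemma Phi_inj (f : {poly K}) : (size f <= p)%N -> Phi f = 0 -> f = 0.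
Proof.
move=> hs h0; apply: poly_eq0_small => // i.
elim/ltn_ind: i => i IH hi.
have := congr1 (fun g : {poly K} => g`_i) h0.
rewrite /Phi /tr coef_take_poly hi coef0 coefM big_ord_recl /= coefEE0 mul1r subn0.
rewrite big1 ?addr0 // => j _.
rewrite IH ?mulr0 //; last by apply: leq_ltn_trans hi; apply: leq_subr.
by rewrite /bump /= add1n subnS prednK ?subn_gt0 // ?leq_subr; case: i {IH hi} j => [[]|].
Qed.

End Exp.

Lemma size_iter_deriv n (g : {poly K}) :
  (size (iter n (fun q => q^`()) g) <= size g - n)%N.
Proof.
elim: n => [|n IH] /=; first by rewrite subn0.
set q := iter n _ g.
have [->|nz] := eqVneq q 0; first by rewrite deriv0 size_poly0.
have h1 := lt_size_deriv nz.
move: IH h1; rewrite -/q subnS; move: (size q^`()) (size q) (size g) => a b d; lia.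
Qed.

Lemma iter_deriv_nil (g : {poly K}) :
  (size g <= p)%N -> iter p (fun q => q^`()) g = 0.
Proof.
move=> hs; apply/eqP; rewrite -size_poly_eq0 -leqn0.
apply: leq_trans (size_iter_deriv p g) _; lia.
Qed.

Lemma Nop_scale s u (f : {poly K}) : s != 0 ->
  Nop s u f = s *: Nop 1 (u / s) f.
Proof.
move=> s0; rewrite /Nop scale1r scalerDr scalerA mulrC divfK //.
Qed.

Lemma Nop_linZ s u k (f : {poly K}) : Nop s u (k *: f) = k *: Nop s u f.
Proof.
rewrite /Nop derivZ /Tp -scalerAr /tr take_polyZ scalerDr !scalerA.
by rewrite (mulrC s) (mulrC u).
Qed.

Lemma size_iter_Nop n s u (f : {poly K}) :
  (size f <= p)%N -> (size (iter n (Nop s u) f) <= p)%N.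
Proof. by move=> hs; elim: n => [|n IH] //=; apply: size_Nop. Qed.

Lemma Nop_nil s u (f : {poly K}) : (size f <= p)%N -> iter p (Nop s u) f = 0.
Proof.
move=> hs; have [->|s0] := eqVneq s 0; first exact: Nop_nil0.
have e : forall n, iter n (Nop s u) f = s ^+ n *: iter n (Nop 1 (u / s)) f.
  elim => [|n IH] /=; first by rewrite scale1r.
  by rewrite IH Nop_scale // Nop_linZ scalerA exprS.
rewrite e; apply/eqP; rewrite scaler_eq0; apply/orP; right; apply/eqP.
apply: (Phi_inj (c := u / s)); first exact: size_iter_Nop.
rewrite -Phi_iter; apply: iter_deriv_nil; exact: size_tr.
Qed.




Definition al (f : {poly K}) := f`_p.
Definition be (f : {poly K}) := f`_p.+1.

Definition Frest (f g k : {poly K}) : {poly K} :=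
  (al f * be g * be k + be f * al g * be k + be f * be g * al k)%:P
  + (al f * al g) *: (tr k)^`() + (al f * al k) *: (tr g)^`()
  + (al g * al k) *: (tr f)^`()
  + (be f * be g) *: Tp (tr k) + (be f * be k) *: Tp (tr g)
  + (be g * be k) *: Tp (tr f).

Definition F (f g k : {poly K}) : {poly K} :=
  (al f * al g * al k) *: 'X^(p.+1) + Frest f g k.

Lemma al_lin c (f f' : {poly K}) : al (c *: f + f') = c * al f + al f'.
Proof. by rewrite /al coefD coefZ. Qed.
Lemma be_lin c (f f' : {poly K}) : be (c *: f + f') = c * be f + be f'.
Proof. by rewrite /be coefD coefZ. Qed.
Lemma tr_lin c (f f' : {poly K}) : tr (c *: f + f') = c *: tr f + tr f'.
Proof. by rewrite /tr take_polyD take_polyZ. Qed.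
Lemma deriv_lin c (f f' : {poly K}) : (c *: f + f')^`() = c *: f^`() + f'^`().
Proof. by rewrite derivD derivZ. Qed.
Lemma Tp_lin c (f f' : {poly K}) : Tp (c *: f + f') = c *: Tp f + Tp f'.
Proof. by rewrite /Tp mulrDr -scalerAr tr_lin. Qed.

Lemma F_lin1 c (f f' g k : {poly K}) :
  F (c *: f + f') g k = c *: F f g k + F f' g k.
Proof.
rewrite /F /Frest !al_lin !be_lin !tr_lin !deriv_lin !Tp_lin.
rewrite -!mul_polyC !polyCD !polyCM.
ring.
Qed.

Lemma F_sym1 (f g k : {poly K}) : F f g k = F g f k.
Proof. rewrite /F /Frest -!mul_polyC !polyCD !polyCM; ring. Qed.

Lemma F_sym2 (f g k : {poly K}) : F f g k = F f k g.
Proof. rewrite /F /Frest -!mul_polyC !polyCD !polyCM; ring. Qed.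


Lemma sz_add (a b : {poly K}) n :
  (size a <= n)%N -> (size b <= n)%N -> (size (a + b)%R <= n)%N.
Proof.
move=> ha hb; apply: leq_trans (size_polyD _ _) _; by rewrite geq_max ha hb.
Qed.

Lemma sz_scale (a : {poly K}) x n : (size a <= n)%N -> (size (x *: a) <= n)%N.
Proof. by move=> ha; apply: leq_trans (size_scale_leq _ _) ha. Qed.

Lemma size_Frest f g k : (size (Frest f g k) <= p)%N.
Proof.
have hd : forall q, (size (tr q)^`() <= p)%N.
  by move=> q; apply: size_deriv_le; apply: size_tr.
have ht : forall q, (size (Tp q) <= p)%N by move=> q; apply: size_tr.
rewrite /Frest; repeat apply: sz_add; try apply: sz_scale => //.
by apply: leq_trans (size_polyC_leq1 _) _; apply: leq_trans hp3.
Qed.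

Lemma size_F f g k : (size (F f g k) <= p.+2)%N.
Proof.
rewrite /F; apply: sz_add.
  by apply: sz_scale; rewrite size_polyXn.
by apply: leq_trans (size_Frest _ _ _) _; apply: leqW; apply: leqW.
Qed.

Lemma small_al (v : {poly K}) : (size v <= p)%N -> al v = 0.
Proof. by move=> h; rewrite /al nth_default. Qed.
Lemma small_be (v : {poly K}) : (size v <= p)%N -> be v = 0.
Proof. by move=> h; rewrite /be nth_default // leqW. Qed.

Lemma al_F f g k : al (F f g k) = 0.
Proof.
rewrite /al /F coefD coefZ coefXn (ltn_eqF (ltnSn p)) mulr0 add0r.
exact: small_al (size_Frest _ _ _).
Qed.

Lemma be_F f g k : be (F f g k) = al f * al g * al k.
Proof.
rewrite /be /F coefD coefZ coefXn eqxx mulr1.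
by have := small_be (size_Frest f g k); rewrite /be => ->; rewrite addr0.
Qed.

Lemma F_small f g k : al k = 0 -> (size (F f g k) <= p)%N.
Proof. by move=> h; rewrite /F h mulr0 scale0r add0r; apply: size_Frest. Qed.

Lemma F_V X (v : {poly K}) : (size v <= p)%N ->
  F X X v = Nop (al X * al X) (be X * be X) v.
Proof.
move=> h; rewrite /F /Frest /Nop (small_al h) (small_be h) (tr_id h).
rewrite !(mulr0, mul0r, scale0r, addr0, add0r).
by [].
Qed.

Lemma iter_F_nil X q : iter p.+2 (F X X) q = 0.
Proof.
rewrite !iterSr.
set v := F X X (F X X q).
have hv : (size v <= p)%N by apply: F_small; apply: al_F.
have e : forall n, iter n (F X X) v = iter n (Nop (al X * al X) (be X * be X)) v.
  elim => [|n IH] //=; rewrite IH F_V //; exact: size_iter_Nop.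
by rewrite e; apply: Nop_nil.
Qed.


Lemma tr_Xn n : (p <= n)%N -> tr 'X^n = 0.
Proof.
move=> hn; apply/polyP => i; rewrite /tr coef_take_poly coefXn coef0.
case: ltnP => // hi; rewrite (ltn_eqF (leq_trans hi hn)) //.
Qed.

Lemma Tp0 : Tp 0 = 0. Proof. by rewrite /Tp mulr0 /tr take_poly0r. Qed.

Lemma al_Xp : al 'X^p = 1. Proof. by rewrite /al coefXn eqxx. Qed.
Lemma be_Xp : be 'X^p = 0. Proof. by rewrite /be coefXn (gtn_eqF (ltnSn p)). Qed.
Lemma al_Xp1 : al 'X^(p.+1) = 0. Proof. by rewrite /al coefXn (ltn_eqF (ltnSn p)). Qed.
Lemma be_Xp1 : be 'X^(p.+1) = 1. Proof. by rewrite /be coefXn eqxx. Qed.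

Ltac simplF := rewrite !(mulr0, mul0r, mulr1, mul1r, scale0r, scaler0, scale1r,
   addr0, add0r, polyC0, deriv0, Tp0).

Lemma F_aaa : F 'X^p 'X^p 'X^p = 'X^(p.+1).
Proof.
rewrite /F /Frest al_Xp be_Xp (tr_Xn (leqnn p)); simplF; by [].
Qed.

Lemma F_abb : F 'X^p 'X^(p.+1) 'X^(p.+1) = 1.
Proof.
rewrite /F /Frest al_Xp be_Xp al_Xp1 be_Xp1 (tr_Xn (leqnn p)) (tr_Xn (leqnSn p)).
by simplF.
Qed.

Lemma F_bbv (v : {poly K}) : (size v <= p)%N -> F 'X^(p.+1) 'X^(p.+1) v = Tp v.
Proof.
move=> h; rewrite /F /Frest al_Xp1 be_Xp1 (small_al h) (small_be h) (tr_id h).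
rewrite (tr_Xn (leqnSn p)); simplF; by [].
Qed.

Lemma F_aav (v : {poly K}) : (size v <= p)%N -> F 'X^p 'X^p v = v^`().
Proof.
move=> h; rewrite /F /Frest al_Xp be_Xp (small_al h) (small_be h) (tr_id h).
rewrite (tr_Xn (leqnn p)); simplF; by [].
Qed.

Lemma Tp1 : Tp 1 = 'X.
Proof. by rewrite /Tp mulr1 tr_id // size_polyX; apply: leq_trans hp3. Qed.


Lemma F_lin2 c (f g g' k : {poly K}) :
  F f (c *: g + g') k = c *: F f g k + F f g' k.
Proof. by rewrite F_sym1 F_lin1 !(F_sym1 _ f). Qed.

Lemma F_lin3 c (f g k k' : {poly K}) :
  F f g (c *: k + k') = c *: F f g k + F f g k'.
Proof. by rewrite F_sym2 F_lin2 !(F_sym2 f _ g). Qed.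

End Poly.

Lemma rV_lin (K : fieldType) n c (x x' : 'rV[K]_n) :
  rVpoly (c *: x + x') = c *: rVpoly x + rVpoly x'.
Proof.
apply/polyP => i; rewrite coefD coefZ !coef_rVpoly.
by case: insub => [j|]; rewrite ?mxE ?mulr0 ?addr0.
Qed.

Lemma polyrV_lin (K : fieldType) n c (f g : {poly K}) :
  poly_rV (c *: f + g) = c *: poly_rV f + poly_rV g :> 'rV_n.
Proof. by apply/rowP => i; rewrite !mxE coefD coefZ. Qed.

Fixpoint mk (n : nat) : tmonomial :=
  match n with
  | 0 => TOp TVar (TOp TVar TVar TVar) (TOp TVar TVar TVar)
  | n.+1 => TOp TVar TVar (TOp (TOp TVar TVar TVar) (TOp TVar TVar TVar) (mk n))
  end.

Lemma tdeg_mk n : (n <= tdeg (mk n))%N.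
Proof. elim: n => [|n IH] //=; lia. Qed.

Theorem mainTheorem3 (K : fieldType) (p : nat)
  (hp : p \in [pchar K]) (hp3 : (3 < p)%N) :
  exists (A : vectType K) (op : A -> A -> A -> A),
    trilinear op /\ symmetric3 op /\ engel op /\ ~ weakly_nilpotent op.
Proof.
pose op := fun x y z : 'rV[K]_(p.+2) =>
  (poly_rV (F p (rVpoly x) (rVpoly y) (rVpoly z)) : 'rV[K]_(p.+2)).
have rvop : forall x y z, rVpoly (op x y z) = F p (rVpoly x) (rVpoly y) (rVpoly z).
  by move=> x y z; rewrite poly_rV_K // size_F.
exists 'rV[K]_(p.+2), op.
split; [|split; [|split]].
- split; [|split] => c x x' y z; rewrite /op rV_lin.
  + by rewrite F_lin1 polyrV_lin.
  + by rewrite F_lin2 polyrV_lin.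
  + by rewrite F_lin3 polyrV_lin.
- split => x y z; rewrite /op; [by rewrite F_sym1 | by rewrite F_sym2].
- move=> x; exists p.+2 => y.
  have e : forall n, rVpoly (iter n (op x x) y) = iter n (F p (rVpoly x) (rVpoly x)) (rVpoly y).
    by elim => [|n IH] //=; rewrite rvop IH.
  by rewrite -[LHS]rVpolyK e iter_F_nil ?linear0.
- move=> H; have [n Hn] := H (poly_rV 'X^p).
  have ra : rVpoly (poly_rV 'X^p : 'rV[K]_(p.+2)) = 'X^p.
    by rewrite poly_rV_K // size_polyXn.
  have rb : rVpoly (teval op (poly_rV 'X^p) (TOp TVar TVar TVar)) = 'X^(p.+1).
    by rewrite /= rvop ra F_aaa.
  have hv : forall k, rVpoly (teval op (poly_rV 'X^p) (mk k)) = 1.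
    elim => [|k IH].
      by rewrite /= rvop ra -/(teval op _ (TOp TVar TVar TVar)) rb F_abb.
    rewrite /= rvop ra rvop -/(teval op _ (TOp TVar TVar TVar)) rb IH.
    have s1 : (size (1%R : {poly K}) <= p)%N by rewrite size_poly1; lia.
    have sX : (size ('X : {poly K}) <= p)%N by rewrite size_polyX; lia.
    by rewrite F_bbv // Tp1 // F_aav // derivX.
  have := Hn (mk n) (tdeg_mk n).
  move/(congr1 (@rVpoly K p.+2)); rewrite hv linear0 => /eqP.
  by rewrite oner_eq0.
Qed.
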